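(* Let $n=5$ and let $\mathcal{K}=\{1,2,3\}$. For every channel matrix $\boldsymbol{D}=(d_{ji})_{j,i\in\mathcal{K}}$ whose entries are monomials $d_{ji}=x^{k_{ji}}$ ($k_{ji}\in\mathbb{N}$), there is no choice of transmission offsets $p_{ji}\in\{0,1,\dots,4\}$, $i,j\in\mathcal{K}$ (one message $W_{ji}$ per transmitter–receiver pair, i.e. $m_{ji}=1$), such that all separability conditions (S1), (S2), (S3) hold simultaneously. In other words, perfect Cyclic Interference Alignment achieving $\frac{9}{5}$ degrees of freedom with $n=5$ dimensions is infeasible on the $3$-user $X$-network.
   Context: Cyclic polynomial channel model of the $3$-user $X$-network. Fix $n\in\mathbb{N}$; all congruences are taken in the polynomial ring modulo $x^n-1$, so $x^a\equiv x^b \pmod{x^n-1}$ iff $a\equiv b \pmod n$. Let $\mathcal{K}=\{1,2,3\}$. Transmitter $\mathrm{Tx}_i$ holds one message $W_{ji}$ for each receiver $\mathrm{Rx}_j$ ($9$ messages in total), each message being an element of an abelian group (binary strings of length $t$). $\mathrm{Tx}_i$ chooses offsets $p_{ji}\in\{0,\dots,n-1\}$ and transmits $u_i(x)\equiv\sum_{j\in\mathcal{K}}W_{ji}x^{p_{ji}}$. The channel matrix is $\boldsymbol{D}=(d_{ji})$ with each $d_{ji}$ a monomial $x^{k}$, $k\in\mathbb{N}$ (a cyclic shift), known to all users. Receiver $\mathrm{Rx}_j$ observes $r_j(x)\equiv\sum_{i\in\mathcal{K}}d_{ji}u_i(x)$, whose coefficient at $x^m$ is the sum of all messages arriving at offset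 $m$. At $\mathrm{Rx}_a$ the dedicated signals are $d_{al}x^{p_{al}}$ ($l\in\mathcal{K}$) and the interfering signals are $d_{al}x^{p_{bl}}$ with $l\in\mathcal{K}$, $b\ne a$. Separability conditions: (S1) intra-user: for each $i$, $x^{p_{1i}},x^{p_{2i}},x^{p_{3i}}$ are pairwise incongruent; (S2) multiple-access: for each $a$, the three dedicated signals $d_{a1}x^{p_{a1}},d_{a2}x^{p_{a2}},d_{a3}x^{p_{a3}}$ are pairwise incongruent; (S3) inter-user: for each $a$, every dedicated signal at $\mathrm{Rx}_a$ is incongruent to every interfering signal at $\mathrm{Rx}_a$. A message is received interference-free if it occupies an offset at its intended receiver containing no other message; the degrees of freedom are $M/n$ with $M$ the number of dedicated messages received interference-free. *)

(* Defs.v *)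
From mathcomp Require Import all_boot.
Set Implicit Arguments. Unset Strict Implicit. Unset Printing Implicit Defensive.

(* Monomials x^a modulo x^n - 1 are represented by their exponent a : nat;
   x^a == x^b (mod x^n - 1) iff a = b (mod n). *)
Definition mono_cong (n a b : nat) : Prop := a = b %[mod n].

(* Users K = {1,2,3} are indexed by 'I_3.
   k j i : exponent of d_{ji} = x^(k j i)  (receiver j, transmitter i).
   p j i : offset of message W_{ji} at transmitter i, in {0,...,n-1}. *)

Definition S1 (n : nat) (p : 'I_3 -> 'I_3 -> 'I_n) : Prop :=
  forall i j j' : 'I_3, j != j' -> ~ mono_cong n (p j i) (p j' i).

Definition S2 (n : nat) (k : 'I_3 -> 'I_3 -> nat) (p : 'I_3 -> 'I_3 -> 'I_n) : Prop :=
  forall a l l' : 'I_3, l != l' ->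
    ~ mono_cong n (k a l + p a l) (k a l' + p a l').

Definition S3 (n : nat) (k : 'I_3 -> 'I_3 -> nat) (p : 'I_3 -> 'I_3 -> 'I_n) : Prop :=
  forall a b l l' : 'I_3, b != a ->
    ~ mono_cong n (k a l + p a l) (k a l' + p b l').

(* Main.v *)
Require Import Defs.
From mathcomp Require Import all_boot.
From mathcomp Require Import zify.

Set Implicit Arguments. Unset Strict Implicit. Unset Printing Implicit Defensive.

Fixpoint allI (n : nat) (f : nat -> bool) : bool :=
  match n with 0 => true | n'.+1 => if f n' then allI n' f else false end.

Lemma allIP n f : allI n f -> forall i, i < n -> f i.
Proof.
elim: n => [|n IH] //= H i Hi.
move: H; case E: (f n) => // H.
rewrite ltnS leq_eqVlt in Hi; case/orP: Hi => [/eqP -> //|]; exact: IH.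
Qed.

Fixpoint hasI (n : nat) (f : nat -> bool) : bool :=
  match n with 0 => false | n'.+1 => if f n' then true else hasI n' f end.

Lemma hasIP n f : hasI n f -> exists2 i, i < n & f i.
Proof.
elim: n => [|n IH] //=; case E: (f n) => H.
  by exists n.
by case: (IH H) => i Hi Hf; exists i => //; apply: ltnW.
Qed.

Definition S1b (P : nat -> nat -> nat) : bool :=
  allI 3 (fun i => allI 3 (fun j => allI 3 (fun j' =>
     if j != j' then P j i %% 5 != P j' i %% 5 else true))).

Definition rxok (P : nat -> nat -> nat) (K : nat -> nat) (a : nat) : bool :=
  if allI 3 (fun l => allI 3 (fun l' =>
     if l != l' then (K l + P a l) %% 5 != (K l' + P a l') %% 5 else true)) then
  allI 3 (fun b => allI 3 (fun l => allI 3 (fun l' =>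
     if b != a then (K l + P a l) %% 5 != (K l' + P b l') %% 5 else true)))
  else false.

Definition kf (k0 k1 k2 : nat) (l : nat) : nat := nth 0 [:: k0; k1; k2] l.

Definition mkp (x0 y0 x1 y1 x2 y2 : nat) (j l : nat) : nat :=
  if j == 0 then 0 else if j == 1 then kf x0 x1 x2 l else kf y0 y1 y2 l.

Definition search : bool :=
  allI 5 (fun x0 => allI 5 (fun y0 => allI 5 (fun x1 => allI 5 (fun y1 =>
  allI 5 (fun x2 => allI 5 (fun y2 =>
     if S1b (mkp x0 y0 x1 y1 x2 y2) then
     hasI 3 (fun a => allI 5 (fun k0 => allI 5 (fun k1 => allI 5 (fun k2 =>
        if rxok (mkp x0 y0 x1 y1 x2 y2) (kf k0 k1 k2) a then false else true)))) else true)))))).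

Lemma search_true : search.
Proof. vm_compute. reflexivity. Qed.

Lemma allIP' n (f : nat -> bool) : (forall i, i < n -> f i) -> allI n f.
Proof.
elim: n => [|n IH] //= H.
by rewrite H // IH // => i Hi; apply: H; apply: ltnW.
Qed.


Lemma search_spec x0 y0 x1 y1 x2 y2 :
  x0 < 5 -> y0 < 5 -> x1 < 5 -> y1 < 5 -> x2 < 5 -> y2 < 5 ->
  S1b (mkp x0 y0 x1 y1 x2 y2) ->
  exists2 a, a < 3 & forall k0 k1 k2, k0 < 5 -> k1 < 5 -> k2 < 5 ->
    rxok (mkp x0 y0 x1 y1 x2 y2) (kf k0 k1 k2) a = false.
Proof.
move=> h0 h1 h2 h3 h4 h5 hS.
have := search_true; rewrite /search => /allIP /(_ _ h0) /allIP /(_ _ h1)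
  /allIP /(_ _ h2) /allIP /(_ _ h3) /allIP /(_ _ h4) /allIP /(_ _ h5).
rewrite hS => /hasIP [a Ha H]; exists a => // k0 k1 k2 g0 g1 g2.
move: H => /allIP /(_ _ g0) /allIP /(_ _ g1) /allIP /(_ _ g2).
by case: rxok.
Qed.

Lemma ordI i (H : i < 3) : Ordinal H = inord i.
Proof. by apply: val_inj; rewrite /= inordK. Qed.

Theorem theorem1 (k : 'I_3 -> 'I_3 -> nat) :
  ~ exists p : 'I_3 -> 'I_3 -> 'I_5, [/\ S1 p, S2 k p & S3 k p].
Proof.
case=> p [H1 H2 H3].
pose pn (j l : nat) : nat := val (p (inord j) (inord l)).
have pnE (j l : 'I_3) : pn j l = p j l by rewrite /pn !inord_val.
have pn5 j l : pn j l < 5 by exact: ltn_ord.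
pose q j l := (pn j l + 5 - pn 0 l) %% 5.
pose P := mkp (q 1 0) (q 2 0) (q 1 1) (q 2 1) (q 1 2) (q 2 2).
have PE j l : j < 3 -> l < 3 -> P j l %% 5 = (pn j l + 5 - pn 0 l) %% 5.
  rewrite /P /mkp /kf /q.
  case: j => [|[|[|j]]] // _; case: l => [|[|[|l]]] //= _;
    rewrite ?mod0n ?modn_mod; move: (pn5 0 0) (pn5 0 1) (pn5 0 2); lia.
have q5 j l : q j l < 5 by rewrite /q ltn_mod.
have hS : S1b P.
  apply: allIP' => i Hi; apply: allIP' => j Hj; apply: allIP' => j' Hj'.
  case: eqP => // /eqP hjj /=.
  rewrite !PE //; apply/eqP => E.
  have := H1 (Ordinal Hi) (Ordinal Hj) (Ordinal Hj').
  rewrite /mono_cong -!pnE /=; apply => //.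
  move: (pn5 0 i) E; lia.
have [a Ha HK] := search_spec (q5 1 0) (q5 2 0) (q5 1 1) (q5 2 1) (q5 1 2) (q5 2 2) hS.
fold P in HK.

pose kk l := (k (inord a) (inord l) + pn 0 l) %% 5.
have kk5 l : kk l < 5 by rewrite /kk ltn_mod.
move: (HK _ _ _ (kk5 0) (kk5 1) (kk5 2)).
set K := kf _ _ _.
have KE l : l < 3 -> K l %% 5 = (k (inord a) (inord l) + pn 0 l) %% 5.
  by rewrite /K /kf; case: l => [|[|[|l]]] //= _; rewrite /kk modn_mod.
have SE b l : b < 3 -> l < 3 ->
    (K l + P b l) %% 5 = (k (inord a) (inord l) + pn b l) %% 5.
  move=> Hb Hl; rewrite -modnDm KE // PE // modnDm; move: (pn5 0 l); lia.
suff -> : rxok P K a by [].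
rewrite /rxok.
have -> : allI 3 (fun l => allI 3 (fun l' =>
     if l != l' then (K l + P a l) %% 5 != (K l' + P a l') %% 5 else true)).
  apply: allIP' => l Hl; apply: allIP' => l' Hl'.
  case: eqP => // /eqP hl /=.
  rewrite !SE //; apply/eqP.
  have := H2 (Ordinal Ha) (Ordinal Hl) (Ordinal Hl') hl.
  rewrite /mono_cong -!pnE /= !ordI; exact.
apply: allIP' => b Hb; apply: allIP' => l Hl; apply: allIP' => l' Hl'.
case: eqP => // /eqP hb /=.
rewrite !SE //; apply/eqP.
have := H3 (Ordinal Ha) (Ordinal Hb) (Ordinal Hl) (Ordinal Hl') hb.
rewrite /mono_cong -!pnE /= !ordI; exact.
Qed.
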